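(* Under the hypotheses of the following statement, the vectors $u_1$ and $u_2$ can be chosen nonnegative. Statement: Let $\mathcal{A}\in\mathbb{R}^{m\times m\times n}$ be $(1,2)$-symmetric and nonnegative with $\mathcal{A}=\begin{pmatrix}\mathcal{A}_1&0\\0&\mathcal{A}_2\end{pmatrix}$, $\mathcal{A}_i\in\mathbb{R}^{m_i\times m_i\times n}$, $m_1+m_2=m$, $\mathcal{A}_1,\mathcal{A}_2$ irreducible; with $\varphi$ as defined in the context, assume $\varphi(\mathcal{A})<\varphi(\mathcal{A}_1)+\|\mathcal{A}_2\|^2$, $\varphi(\mathcal{A})<\varphi(\mathcal{A}_2)+\|\mathcal{A}_1\|^2$, and that the solution $(U,U,W)$ of the $(1,2)$-symmetric best rank-$(2,2,2)$ approximation problem for $\mathcal{A}$ is unique; then a representative has $U=\begin{pmatrix}u_1&0\\0&u_2\end{pmatrix}$ with $u_1\in\mathbb{R}^{m_1}$, $u_2\in\mathbb{R}^{m_2}$.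
   Context: A tensor is $(1,2)$-symmetric if $\mathcal{A}(i,j,k)=\mathcal{A}(j,i,k)$. It is (1,2)-reducible if there exist nonempty proper $I\subset\{1,\dots,m\}$ and nonempty $K\subseteq\{1,\dots,n\}$ with $a_{ijk}=a_{jik}=0$ for $i\in I,j\notin I,k\in K$; 3-reducible if $a_{ijk}=0$ for $i,j\in I,k\in K$; irreducible if neither holds for any $I,K$. $(X,Y,Z)\cdot\mathcal{H}$ has entries $\sum x_{i\alpha}y_{j\beta}z_{k\gamma}h_{\alpha\beta\gamma}$; $\mathcal{A}\cdot(X,Y,Z):=(X^T,Y^T,Z^T)\cdot\mathcal{A}$; Frobenius norm. For $(1,2)$-symmetric $\mathcal{B}\in\mathbb{R}^{k\times k\times n}$, $\varphi(\mathcal{B})=\min\|\mathcal{B}-(X,X,Z)\cdot\mathcal{H}\|^2$ over $X\in\mathbb{R}^{k\times2}$, $Z\in\mathbb{R}^{n\times2}$ with orthonormal columns and $\mathcal{H}\in\mathbb{R}^{2\times2\times2}$. The $(1,2)$-symmetric best rank-$(2,2,2)$ approximation problem is $\max\|\mathcal{A}\cdot(X,X,Z)\|$ over $X^TX=I_2,Z^TZ=I_2$; solutions are equivalence classes under $(U,U,W)\mapsto(UQ_1,UQ_1,WQ_3)$ with $Q_1,Q_3$ orthogonal. *)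

(* Defs.v *)
From HB Require Import structures.
From mathcomp Require Import all_boot all_order all_algebra.
From mathcomp Require Import boolp classical_sets reals.
Set Implicit Arguments. Unset Strict Implicit. Unset Printing Implicit Defensive.
Import Order.TTheory GRing.Theory Num.Theory.
Local Open Scope ring_scope.
Local Open Scope classical_set_scope.

Definition tensor (R : Type) (p q r : nat) := 'I_p -> 'I_q -> 'I_r -> R.

Section Tensors.
Variable R : realType.

Definition sym12 p n (A : tensor R p p n) : Prop :=
  forall i j k, A i j k = A j i k.

Definition nonneg_tensor p q r (A : tensor R p q r) : Prop :=
  forall i j k, 0 <= A i j k.

Definition reducible12 p n (A : tensor R p p n) : Prop :=
  exists (I : {set 'I_p}) (K : {set 'I_n}),
    [/\ I != finset.set0, I != finset.setTfor 'I_p, K != finset.set0 &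
      forall i j k, i \in I -> j \notin I -> k \in K ->
        A i j k = 0 /\ A j i k = 0].

Definition reducible3 p n (A : tensor R p p n) : Prop :=
  exists (I : {set 'I_p}) (K : {set 'I_n}),
    [/\ I != finset.set0, I != finset.setTfor 'I_p, K != finset.set0 &
      forall i j k, i \in I -> j \in I -> k \in K -> A i j k = 0].

Definition irreducible p n (A : tensor R p p n) : Prop :=
  ~ reducible12 A /\ ~ reducible3 A.

Definition blk m1 m2 n (A1 : tensor R m1 m1 n) (A2 : tensor R m2 m2 n)
  : tensor R (m1 + m2) (m1 + m2) n :=
  fun i j k =>
    match split i, split j with
    | inl i', inl j' => A1 i' j' k
    | inr i', inr j' => A2 i' j' k
    | _, _ => 0
    end.

Definition tnorm p q r (A : tensor R p q r) : R :=
  Num.sqrt (\sum_(i < p) \sum_(j < q) \sum_(k < r) A i j k ^+ 2).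

Definition tmul p q r a b c (X : 'M[R]_(p, a)) (Y : 'M[R]_(q, b))
  (Z : 'M[R]_(r, c)) (H : tensor R a b c) : tensor R p q r :=
  fun i j k => \sum_(al < a) \sum_(be < b) \sum_(ga < c)
                 X i al * Y j be * Z k ga * H al be ga.

Definition tmulr p q r a b c (A : tensor R p q r) (X : 'M[R]_(p, a))
  (Y : 'M[R]_(q, b)) (Z : 'M[R]_(r, c)) : tensor R a b c :=
  tmul X^T Y^T Z^T A.

Definition tsub p q r (A B : tensor R p q r) : tensor R p q r :=
  fun i j k => A i j k - B i j k.

Definition orthonormal_cols p a (X : 'M[R]_(p, a)) : Prop := X^T *m X = 1%:M.

(* varphi(B) = min ||B - (X,X,Z).H||^2 (taken as an infimum; it is attained) *)
Definition varphi k n (B : tensor R k k n) : R :=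
  inf [set r | exists (X : 'M[R]_(k, 2)) (Z : 'M[R]_(n, 2)) (H : tensor R 2 2 2),
          [/\ orthonormal_cols X, orthonormal_cols Z &
              r = tnorm (tsub B (tmul X X Z H)) ^+ 2]].

Definition is_solution m n (A : tensor R m m n) (U : 'M[R]_(m, 2)) (W : 'M[R]_(n, 2))
  : Prop :=
  [/\ orthonormal_cols U, orthonormal_cols W &
    forall (X : 'M[R]_(m, 2)) (Z : 'M[R]_(n, 2)),
      orthonormal_cols X -> orthonormal_cols Z ->
      tnorm (tmulr A X X Z) <= tnorm (tmulr A U U W)].

Definition unique_solution m n (A : tensor R m m n) : Prop :=
  forall U W U' W', is_solution A U W -> is_solution A U' W' ->
    exists (Q1 Q3 : 'M[R]_2),
      [/\ orthonormal_cols Q1, orthonormal_cols Q3,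
          U' = U *m Q1 & W' = W *m Q3].

End Tensors.

(* Main.v *)
Require Import Defs.
From HB Require Import structures.
From mathcomp Require Import all_boot all_order all_algebra.
From mathcomp Require Import boolp classical_sets reals ring lra.
From mathcomp Require Import topology normedtype matrix_normedtype derive.
Import Order.TTheory GRing.Theory Num.Theory.
Import numFieldNormedType.Exports.
Local Open Scope ring_scope.
Set Implicit Arguments. Unset Strict Implicit.

Definition ss (R : realType) p q r (T : tensor R p q r) : R :=
  \sum_(i < p) \sum_(j < q) \sum_(k < r) T i j k ^+ 2.

Lemma sqr_sum (R : realType) (I : finType) (F : I -> R) :
  (\sum_i F i) ^+ 2 = \sum_i \sum_j F i * F j.
Proof. by rewrite expr2 mulr_suml; apply: eq_bigr => i _; rewrite mulr_sumr. Qed.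

Lemma orthoE (R : realType) p a (X : 'M[R]_(p, a)) al be :
  orthonormal_cols X -> \sum_i X i al * X i be = (al == be)%:R.
Proof.
move=> /matrixP/(_ al be); rewrite !mxE => <-.
by apply: eq_bigr => i _; rewrite mxE.
Qed.

Lemma sumsq_mul (R : realType) p a (X : 'M[R]_(p, a)) (v : 'I_a -> R) :
  orthonormal_cols X -> \sum_i (\sum_al X i al * v al) ^+ 2 = \sum_al v al ^+ 2.
Proof.
move=> oX.
under eq_bigr do rewrite sqr_sum.
rewrite exchange_big /=; apply: eq_bigr => al _.
rewrite exchange_big /=.
rewrite (bigD1 al) //= [X in _ + X]big1 ?addr0.
  transitivity (v al ^+ 2 * \sum_i X i al * X i al).
    by rewrite mulr_sumr; apply: eq_bigr => i _; rewrite expr2; ring.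
  by rewrite (orthoE al al oX) eqxx mulr1.
move=> be nbe.
transitivity (v al * v be * \sum_i X i al * X i be).
  by rewrite mulr_sumr; apply: eq_bigr => i _; ring.
by rewrite (orthoE al be oX) eq_sym (negbTE nbe) mulr0.
Qed.

Lemma tmulE (R : realType) p q r a b c (X : 'M[R]_(p, a)) (Y : 'M[R]_(q, b))
  (Z : 'M[R]_(r, c)) (H : tensor R a b c) i j k :
  tmul X Y Z H i j k =
  \sum_al X i al * \sum_be Y j be * \sum_ga Z k ga * H al be ga.
Proof.
rewrite /tmul; apply: eq_bigr => al _; rewrite mulr_sumr; apply: eq_bigr => be _.
rewrite !mulr_sumr; apply: eq_bigr => ga _; ring.
Qed.

Lemma ss_tmul (R : realType) p q r a b c (X : 'M[R]_(p, a)) (Y : 'M[R]_(q, b))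
  (Z : 'M[R]_(r, c)) (H : tensor R a b c) :
  orthonormal_cols X -> orthonormal_cols Y -> orthonormal_cols Z ->
  ss (tmul X Y Z H) = ss H.
Proof.
move=> oX oY oZ; rewrite /ss.
under eq_bigr do under eq_bigr do under eq_bigr do rewrite tmulE.
rewrite exchange_big /=.
under eq_bigr do rewrite exchange_big /=.
under eq_bigr do under eq_bigr do rewrite sumsq_mul //.
under eq_bigr do rewrite exchange_big /=.
rewrite exchange_big /=; apply: eq_bigr => al _.
rewrite exchange_big /=.
under eq_bigr do rewrite sumsq_mul //.
rewrite exchange_big /=; apply: eq_bigr => be _.
exact: (sumsq_mul (fun ga => H al be ga) oZ).
Qed.

Lemma pull3 (R : realType) (I J K L : finType) (G : I -> J -> K -> L -> R) :
  \sum_i \sum_j \sum_k \sum_l G i j k l = \sum_l \sum_i \sum_j \sum_k G i j k l.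
Proof.
under eq_bigr do under eq_bigr do rewrite exchange_big /=.
under eq_bigr do rewrite exchange_big /=.
by rewrite exchange_big.
Qed.

Lemma swap3 (R : realType) (I J K A B C : finType)
  (G : I -> J -> K -> A -> B -> C -> R) :
  \sum_i \sum_j \sum_k \sum_a \sum_b \sum_c G i j k a b c =
  \sum_a \sum_b \sum_c \sum_i \sum_j \sum_k G i j k a b c.
Proof.
rewrite [LHS]pull3; apply: eq_bigr => a _.
rewrite [LHS]pull3; apply: eq_bigr => b _.
exact: pull3.
Qed.

Definition ip (R : realType) p q r (T1 T2 : tensor R p q r) : R :=
  \sum_(i < p) \sum_(j < q) \sum_(k < r) T1 i j k * T2 i j k.

Lemma ip_tmul (R : realType) p q r a b c (B : tensor R p q r) (X : 'M[R]_(p, a))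
  (Y : 'M[R]_(q, b)) (Z : 'M[R]_(r, c)) (H : tensor R a b c) :
  ip B (tmul X Y Z H) = ip (tmulr B X Y Z) H.
Proof.
rewrite /ip /tmulr /tmul.
transitivity (\sum_i \sum_j \sum_k \sum_al \sum_be \sum_ga
   (X i al * Y j be * Z k ga * B i j k * H al be ga)).
  do 3 (apply: eq_bigr => ? _); rewrite mulr_sumr; apply: eq_bigr => al _.
  rewrite mulr_sumr; apply: eq_bigr => be _.
  rewrite mulr_sumr; apply: eq_bigr => ga _; ring.
rewrite swap3; do 3 (apply: eq_bigr => ? _).
rewrite !mulr_suml; apply: eq_bigr => i _.
rewrite !mulr_suml; apply: eq_bigr => j _.
rewrite !mulr_suml; apply: eq_bigr => k _.
rewrite !mxE; ring.
Qed.

Lemma ss_ge0 (R : realType) p q r (T : tensor R p q r) : 0 <= ss T.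
Proof. by do 3 (apply: sumr_ge0 => ? _); rewrite sqr_ge0. Qed.

Lemma ss_sub (R : realType) p q r (T1 T2 : tensor R p q r) :
  ss (tsub T1 T2) = ss T1 - 2 * ip T1 T2 + ss T2.
Proof.
rewrite /ss /ip /tsub mulr_sumr -sumrB -big_split /=; apply: eq_bigr => i _.
rewrite mulr_sumr -sumrB -big_split /=; apply: eq_bigr => j _.
rewrite mulr_sumr -sumrB -big_split /=; apply: eq_bigr => k _.
ring.
Qed.

Lemma ss_approx (R : realType) k n (B : tensor R k k n) (X : 'M[R]_(k, 2))
  (Z : 'M[R]_(n, 2)) (H : tensor R 2 2 2) :
  orthonormal_cols X -> orthonormal_cols Z ->
  ss (tsub B (tmul X X Z H)) =
  ss B - ss (tmulr B X X Z) + ss (tsub H (tmulr B X X Z)).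
Proof.
move=> oX oZ; rewrite ss_sub ss_tmul // ip_tmul ss_sub.
suff -> : ip H (tmulr B X X Z) = ip (tmulr B X X Z) H by ring.
rewrite /ip; do 3 (apply: eq_bigr => ? _); exact: mulrC.
Qed.

Lemma ss_tsub_self (R : realType) p q r (T : tensor R p q r) : ss (tsub T T) = 0.
Proof.
by rewrite /ss big1 // => i _; rewrite big1 // => j _; rewrite big1 // => k _;
  rewrite /tsub subrr expr0n.
Qed.

Lemma prod3 (R : realType) (A B C : finType) (f : A -> R) (g : B -> R) (h : C -> R) d :
  (\sum_a f a) * (\sum_b g b) * (\sum_c h c) * d =
  \sum_a \sum_b \sum_c (f a * g b * h c * d).
Proof.
rewrite !mulr_suml; apply: eq_bigr => a _.
rewrite [f a * _]mulr_sumr !mulr_suml; apply: eq_bigr => b _.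
rewrite [f a * g b * _]mulr_sumr !mulr_suml; apply: eq_bigr => c _; ring.
Qed.

Lemma tmulr_mul (R : realType) p q r a b c a' b' c' (A : tensor R p q r)
  (X : 'M[R]_(p, a)) (Y : 'M[R]_(q, b)) (Z : 'M[R]_(r, c))
  (Q1 : 'M[R]_(a, a')) (Q2 : 'M[R]_(b, b')) (Q3 : 'M[R]_(c, c')) al be ga :
  tmulr A (X *m Q1) (Y *m Q2) (Z *m Q3) al be ga =
  tmul Q1^T Q2^T Q3^T (tmulr A X Y Z) al be ga.
Proof.
rewrite /tmulr /tmul.
transitivity (\sum_i \sum_j \sum_k \sum_x \sum_y \sum_z
  (X i x * Q1 x al * (Y j y * Q2 y be) * (Z k z * Q3 z ga) * A i j k)).
  do 3 (apply: eq_bigr => ? _); rewrite !mxE prod3.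
  by do 3 (apply: eq_bigr => ? _).
rewrite swap3; do 3 (apply: eq_bigr => ? _).
rewrite !mxE mulr_sumr; apply: eq_bigr => i _.
rewrite mulr_sumr; apply: eq_bigr => j _.
rewrite mulr_sumr; apply: eq_bigr => k _.
rewrite !mxE; ring.
Qed.

Lemma ss_ext (R : realType) p q r (T1 T2 : tensor R p q r) :
  (forall i j k, T1 i j k = T2 i j k) -> ss T1 = ss T2.
Proof. by move=> e; rewrite /ss; do 3 (apply: eq_bigr => ? _); rewrite e. Qed.

Lemma orthoT_sq (R : realType) a (Q : 'M[R]_a) :
  orthonormal_cols Q -> orthonormal_cols Q^T.
Proof. by rewrite /orthonormal_cols trmxK => /mulmx1C. Qed.

Lemma ss_tmulr_rot (R : realType) p q r (A : tensor R p q r)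
  (X : 'M[R]_(p, 2)) (Y : 'M[R]_(q, 2)) (Z : 'M[R]_(r, 2)) (Q1 Q2 Q3 : 'M[R]_2) :
  orthonormal_cols Q1 -> orthonormal_cols Q2 -> orthonormal_cols Q3 ->
  ss (tmulr A (X *m Q1) (Y *m Q2) (Z *m Q3)) = ss (tmulr A X Y Z).
Proof.
move=> o1 o2 o3; rewrite (ss_ext (tmulr_mul A X Y Z Q1 Q2 Q3)).
by rewrite ss_tmul //; apply: orthoT_sq.
Qed.

Lemma split_l m n (i : 'I_m) : split (lshift n i) = inl i.
Proof. exact: (unsplitK (inl i)). Qed.
Lemma split_r m n (i : 'I_n) : split (rshift m i) = inr i.
Proof. exact: (unsplitK (inr i)). Qed.

Section Blk.
Context (R : realType) (m1 m2 n : nat) (A1 : tensor R m1 m1 n) (A2 : tensor R m2 m2 n).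

Lemma blk_ll i j k : blk A1 A2 (lshift m2 i) (lshift m2 j) k = A1 i j k.
Proof. by rewrite /blk !split_l. Qed.
Lemma blk_rr i j k : blk A1 A2 (rshift m1 i) (rshift m1 j) k = A2 i j k.
Proof. by rewrite /blk !split_r. Qed.
Lemma blk_lr i j k : blk A1 A2 (lshift m2 i) (rshift m1 j) k = 0.
Proof. by rewrite /blk split_l split_r. Qed.
Lemma blk_rl i j k : blk A1 A2 (rshift m1 i) (lshift m2 j) k = 0.
Proof. by rewrite /blk split_l split_r. Qed.

Definition sgn (i : 'I_(m1 + m2)) : R := if (i < m1)%N then 1 else -1.

Lemma sgn_l i : sgn (lshift m2 i) = 1.
Proof. by rewrite /sgn /= ltn_ord. Qed.
Lemma sgn_r i : sgn (rshift m1 i) = -1.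
Proof. by rewrite /sgn /= ltnNge leq_addr. Qed.

Lemma blk_sgn i j k : sgn i * sgn j * blk A1 A2 i j k = blk A1 A2 i j k.
Proof.
case: (split_ordP i) => i' ->; case: (split_ordP j) => j' ->;
  rewrite ?blk_ll ?blk_rr ?blk_lr ?blk_rl ?sgn_l ?sgn_r; ring.
Qed.

Lemma sgn_sq i : sgn i * sgn i = 1.
Proof. by case: (split_ordP i) => i' ->; rewrite ?sgn_l ?sgn_r; ring. Qed.

Definition Dmx p (X : 'M[R]_(m1 + m2, p)) := \matrix_(i, j) (sgn i * X i j).

Lemma DmxE p (X : 'M[R]_(m1 + m2, p)) i j : Dmx X i j = sgn i * X i j.
Proof. by rewrite mxE. Qed.

Lemma Dmx_ortho p (X : 'M[R]_(m1 + m2, p)) :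
  orthonormal_cols X -> orthonormal_cols (Dmx X).
Proof.
rewrite /orthonormal_cols => <-; apply/matrixP => a b; rewrite !mxE.
apply: eq_bigr => i _; rewrite !mxE.
by rewrite mulrACA sgn_sq mul1r.
Qed.

Lemma tmulr_D p r (X : 'M[R]_(m1 + m2, p)) (Z : 'M[R]_(n, r)) a b c :
  tmulr (blk A1 A2) (Dmx X) (Dmx X) Z a b c = tmulr (blk A1 A2) X X Z a b c.
Proof.
rewrite /tmulr /tmul; apply: eq_bigr => i _; apply: eq_bigr => j _.
apply: eq_bigr => k _; rewrite !mxE -[in RHS]blk_sgn; ring.
Qed.

End Blk.

Notation o0 := (@ord0 1).
Notation o1 := (@ord_max 1).

Lemma ord2P (i : 'I_2) : i = o0 \/ i = o1.
Proof. by case: i => [[|[|//]] Hi]; [left|right]; apply/val_inj. Qed.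

Lemma sum_I2 (R : realType) (F : 'I_2 -> R) : \sum_(i < 2) F i = F o0 + F o1.
Proof.
rewrite big_ord_recl big_ord_recl big_ord0 addr0; congr (_ + F _).
exact/val_inj.
Qed.

Lemma mx2_eq (R : realType) (A B : 'M[R]_2) :
  A o0 o0 = B o0 o0 -> A o0 o1 = B o0 o1 -> A o1 o0 = B o1 o0 -> A o1 o1 = B o1 o1 ->
  A = B.
Proof.
move=> e1 e2 e3 e4; apply/matrixP => i j.
by case: (ord2P i) => ->; case: (ord2P j) => ->.
Qed.

Definition mk2 (R : realType) (x y z w : R) : 'M[R]_2 :=
  \matrix_(i, j) if i == o0 then (if j == o0 then x else y)
                 else (if j == o0 then z else w).

Lemma mk2E (R : realType) (x y z w : R) :
  [/\ mk2 x y z w o0 o0 = x, mk2 x y z w o0 o1 = y,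
      mk2 x y z w o1 o0 = z & mk2 x y z w o1 o1 = w].
Proof. by rewrite /mk2 !mxE. Qed.

Definition Emx (R : realType) : 'M[R]_2 := mk2 1 0 0 (-1).

Lemma mulmx2E (R : realType) p q (A : 'M[R]_(p, 2)) (B : 'M[R]_(2, q)) i j :
  (A *m B) i j = A i o0 * B o0 j + A i o1 * B o1 j.
Proof. by rewrite mxE sum_I2. Qed.

Lemma ortho2E (R : realType) (V : 'M[R]_2) :
  orthonormal_cols V <->
  [/\ V o0 o0 * V o0 o0 + V o1 o0 * V o1 o0 = 1,
      V o0 o0 * V o0 o1 + V o1 o0 * V o1 o1 = 0 &
      V o0 o1 * V o0 o1 + V o1 o1 * V o1 o1 = 1].
Proof.
rewrite /orthonormal_cols; split.
  move=> h; have := congr1 (fun M : 'M[R]_2 => M o0 o0) h; have := congr1 (fun M : 'M[R]_2 => M o0 o1) h.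
  have := congr1 (fun M : 'M[R]_2 => M o1 o1) h.
  by rewrite /= !mulmx2E !mxE /=.
case=> e1 e2 e3; apply: mx2_eq; rewrite !mulmx2E !mxE //=.
by rewrite [X in X + _]mulrC [X in _ + X]mulrC.
Qed.

Lemma Q2_cases (R : realType) (Q : 'M[R]_2) :
  orthonormal_cols Q -> Q o0 o1 = Q o1 o0 ->
  [\/ Q = 1%:M, Q = - 1%:M |
      exists V : 'M[R]_2, orthonormal_cols V /\ Q *m V = V *m Emx R].
Proof.
move=> /ortho2E [e00 e01 e11] sym.
set a := Q o0 o0 in e00 e01 *; set d := Q o1 o1 in e01 e11 *.
set b := Q o1 o0 in sym e00 e01 e11 *.
rewrite sym in e01 e11.
have [ad|ad] := eqVneq (a + d) 0.
  have dE : d = - a by apply/eqP; rewrite -subr_eq0 opprK addrC ad.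
  have hab : a * a + b * b = 1 by [].
  apply: Or33.
  have [a1|a1] := eqVneq a (-1).
    have b0 : b = 0.
      by apply/eqP; rewrite -sqrf_eq0 expr2; move: hab; rewrite a1; lra.
    exists (mk2 0 1 1 0); split.
      by apply/ortho2E; case: (mk2E 0 1 1 (0 : R)) => -> -> -> ->; split; ring.
    have [v1 v2 v3 v4] := mk2E 0 1 1 (0 : R).
    have [f1 f2 f3 f4] := mk2E 1 0 0 (-1 : R).
    apply: mx2_eq; rewrite !mulmx2E /Emx ?v1 ?v2 ?v3 ?v4 ?f1 ?f2 ?f3 ?f4;
    rewrite -/a -/d -/b ?sym -?/b ?dE ?a1 ?b0; ring.
  have c0 : 0 < 2 + 2 * a.
    have : -1 <= a by nra.
    by rewrite le_eqVlt eq_sym (negbTE a1) /=; lra.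
  set s := Num.sqrt (2 + 2 * a).
  have s2 : s ^+ 2 = 2 + 2 * a by rewrite sqr_sqrtr // ltW.
  have s0 : s != 0 by rewrite sqrtr_eq0 -ltNge.
  set t := s^-1.
  have t2 : t * t * (2 + 2 * a) = 1 by rewrite -s2 /t expr2; field.
  exists (mk2 ((1 + a) * t) (- b * t) (b * t) ((1 + a) * t)); split.
    apply/ortho2E; case: (mk2E ((1 + a) * t) (- b * t) (b * t) ((1 + a) * t)) => -> -> -> ->.
    split.
    - rewrite -[RHS]t2; apply/eqP; rewrite -subr_eq0; apply/eqP.
      transitivity ((a * a + b * b - 1) * (t * t)); first ring.
      by rewrite hab subrr mul0r.
    - ring.
    - rewrite -[RHS]t2; apply/eqP; rewrite -subr_eq0; apply/eqP.
      transitivity ((a * a + b * b - 1) * (t * t)); first ring.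
      by rewrite hab subrr mul0r.
  have [v1 v2 v3 v4] := mk2E ((1 + a) * t) (- b * t) (b * t) ((1 + a) * t).
  have [f1 f2 f3 f4] := mk2E 1 0 0 (-1 : R).
  apply: mx2_eq; rewrite !mulmx2E /Emx ?v1 ?v2 ?v3 ?v4 ?f1 ?f2 ?f3 ?f4;
    rewrite -/a -/d -/b ?sym -?/b ?dE;
    apply/eqP; rewrite -subr_eq0; apply/eqP.
  - transitivity ((a * a + b * b - 1) * t); first ring.
    by rewrite hab subrr mul0r.
  - ring.
  - ring.
  - transitivity (- (a * a + b * b - 1) * t); first ring.
    by rewrite hab subrr oppr0 mul0r.
have b0 : b = 0.
  have : b * (a + d) = 0 by rewrite -e01; ring.
  by move/eqP; rewrite mulf_eq0 (negbTE ad) orbF => /eqP.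
have a2 : a ^+ 2 == 1 by rewrite expr2 -e00 b0; apply/eqP; ring.
have d2 : d ^+ 2 == 1 by rewrite expr2 -e11 b0; apply/eqP; ring.
move: a2 d2 ad; rewrite !sqrf_eq1 => /orP[] /eqP ea /orP[] /eqP ed; rewrite ea ed.
- move=> _; apply: Or31; apply: mx2_eq; rewrite ?mxE /= -/a -/d -/b ?sym -?/b ?ea ?ed ?b0 //.
- by rewrite subrr eqxx.
- by rewrite addrC subrr eqxx.
- move=> _; apply: Or32; apply: mx2_eq; rewrite ?mxE /= -/a -/d -/b ?sym -?/b ?ea ?ed ?b0 //;
    by rewrite oppr0.
Qed.

Lemma bessel (R : realType) n a (W : 'M[R]_(n, a)) (c : 'I_n -> R) :
  orthonormal_cols W ->
  \sum_ga (\sum_k W k ga * c k) ^+ 2 <= \sum_k c k ^+ 2.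
Proof.
move=> oW; set s := fun ga => \sum_k W k ga * c k.
have h0 : 0 <= \sum_k (c k - \sum_ga W k ga * s ga) ^+ 2.
  by apply: sumr_ge0 => k _; rewrite sqr_ge0.
have e1 : \sum_k (c k - \sum_ga W k ga * s ga) ^+ 2 =
   \sum_k c k ^+ 2 - 2 * \sum_k c k * (\sum_ga W k ga * s ga) +
   \sum_k (\sum_ga W k ga * s ga) ^+ 2.
  rewrite mulr_sumr -sumrB -big_split /=; apply: eq_bigr => k _; ring.
have e2 : \sum_k c k * (\sum_ga W k ga * s ga) = \sum_ga s ga ^+ 2.
  under eq_bigr do rewrite mulr_sumr.
  rewrite exchange_big /=; apply: eq_bigr => ga _.
  rewrite expr2 [X in _ = X * _]/s mulr_suml; apply: eq_bigr => k _; ring.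
rewrite e1 e2 (sumsq_mul s oW) in h0.
by rewrite -/s; lra.
Qed.

Lemma bessel_eq (R : realType) n a (W : 'M[R]_(n, a)) (t : 'I_a -> R) :
  orthonormal_cols W ->
  \sum_ga (\sum_k W k ga * (\sum_de W k de * t de)) ^+ 2 =
  \sum_k (\sum_de W k de * t de) ^+ 2.
Proof.
move=> oW; rewrite (sumsq_mul t oW); apply: eq_bigr => ga _; congr (_ ^+ 2).
under eq_bigr do rewrite mulr_sumr.
rewrite exchange_big /= (bigD1 ga) //= [X in _ + X]big1 ?addr0.
  transitivity (t ga * \sum_k W k ga * W k ga); last by rewrite orthoE // eqxx mulr1.
  by rewrite mulr_sumr; apply: eq_bigr => k _; ring.
move=> de nde; transitivity (t de * \sum_k W k ga * W k de).
  by rewrite mulr_sumr; apply: eq_bigr => k _; ring.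
by rewrite orthoE // eq_sym (negbTE nde) mulr0.
Qed.

Lemma tmulr_E (R : realType) p r (A : tensor R p p r) (Y : 'M[R]_(p, 2))
   (W : 'M[R]_(r, 2)) al be ga :
  tmulr A Y Y W al be ga =
  \sum_k W k ga * \sum_i \sum_j Y i al * Y j be * A i j k.
Proof.
rewrite /tmulr /tmul.
under eq_bigr do rewrite exchange_big /=.
rewrite exchange_big /=; apply: eq_bigr => k _.
rewrite mulr_sumr; apply: eq_bigr => i _; rewrite mulr_sumr; apply: eq_bigr => j _.
rewrite !mxE; ring.
Qed.

Section Blk2.
Context (R : realType) (m1 m2 n : nat) (A1 : tensor R m1 m1 n) (A2 : tensor R m2 m2 n).
Local Notation A := (blk A1 A2).

Definition cc (Y : 'M[R]_(m1 + m2, 2)) al k :=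
  \sum_i \sum_j Y i al * Y j al * A i j k.

Lemma F_block (Y : 'M[R]_(m1 + m2, 2)) (W : 'M[R]_(n, 2)) :
  (forall i, Y (rshift m1 i) o0 = 0) -> (forall i, Y (lshift m2 i) o1 = 0) ->
  ss (tmulr A Y Y W) =
  \sum_ga (\sum_k W k ga * cc Y o0 k) ^+ 2 + \sum_ga (\sum_k W k ga * cc Y o1 k) ^+ 2.
Proof.
move=> h0 h1.
have off1 i j k : Y i o0 * Y j o1 * A i j k = 0.
  case: (split_ordP i) => i' ->; case: (split_ordP j) => j' ->;
  by rewrite ?blk_ll ?blk_rr ?blk_lr ?blk_rl ?h0 ?h1 ?mulr0 ?mul0r.
have off2 i j k : Y i o1 * Y j o0 * A i j k = 0.
  case: (split_ordP i) => i' ->; case: (split_ordP j) => j' ->;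
  by rewrite ?blk_ll ?blk_rr ?blk_lr ?blk_rl ?h0 ?h1 ?mulr0 ?mul0r.
have T01 ga : tmulr A Y Y W o0 o1 ga = 0.
  rewrite tmulr_E big1 // => k _; rewrite big1 ?mulr0 // => i _.
  by rewrite big1 // => j _.
have T10 ga : tmulr A Y Y W o1 o0 ga = 0.
  rewrite tmulr_E big1 // => k _; rewrite big1 ?mulr0 // => i _.
  by rewrite big1 // => j _.
rewrite /ss !sum_I2 !tmulr_E.
rewrite -!(tmulr_E A Y W o0 o1) -!(tmulr_E A Y W o1 o0) !T01 !T10 /cc.
rewrite expr0n /=; ring.
Qed.

End Blk2.

Definition dot (R : realType) n (u v : 'I_n -> R) := \sum_k u k * v k.

Lemma dotC (R : realType) n (u v : 'I_n -> R) : dot u v = dot v u.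
Proof. by apply: eq_bigr => k _; rewrite mulrC. Qed.

Lemma dot_ge0 (R : realType) n (u : 'I_n -> R) : 0 <= dot u u.
Proof. by apply: sumr_ge0 => k _; rewrite -expr2 sqr_ge0. Qed.

Lemma dot0 (R : realType) n (u : 'I_n -> R) : dot u u = 0 -> forall k, u k = 0.
Proof.
move=> h k; apply/eqP; rewrite -[_ == _]orbb -mulf_eq0; apply/eqP.
move/eqP: h; rewrite /dot psumr_eq0 => [/allP /(_ k) /implyP h| i _];
  last by rewrite -expr2 sqr_ge0.
by apply/eqP; move: h; rewrite mem_index_enum.
Qed.

Lemma normalize (R : realType) n (r w : 'I_n -> R) : 0 < dot r r ->
  exists u : 'I_n -> R, [/\ dot u u = 1, dot u w = dot r w / Num.sqrt (dot r r) &
    forall k, r k = Num.sqrt (dot r r) * u k].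
Proof.
move=> h; set s := Num.sqrt (dot r r).
have s2 : s ^+ 2 = dot r r by rewrite sqr_sqrtr // ltW.
have s0 : s != 0 by rewrite sqrtr_eq0 -ltNge.
exists (fun k => r k / s); split.
- transitivity (dot r r / s ^+ 2); last by rewrite s2 divff // gt_eqF.
  rewrite /dot mulr_suml; apply: eq_bigr => k _; field; exact: s0.
- by rewrite /dot mulr_suml; apply: eq_bigr => k _; field.
- by move=> k; field.
Qed.

Lemma unit_perp (R : realType) n (hn : (2 <= n)%N) (w : 'I_n -> R) :
  dot w w = 1 -> exists u : 'I_n -> R, dot u u = 1 /\ dot u w = 0.
Proof.
move=> w1.
have h0 : (0 < n)%N by apply: leq_trans hn.
pose i0 := Ordinal h0; pose i1 := Ordinal hn.
pose r (i : 'I_n) := fun k : 'I_n => (k == i)%:R - w i * w k.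
have s1 i : \sum_k (k == i)%:R = 1 :> R.
  by rewrite (bigD1 i) //= eqxx big1 ?addr0 // => k /negbTE ->.
have s2 i : \sum_k (k == i)%:R * w k = w i.
  rewrite (bigD1 i) //= eqxx mul1r big1 ?addr0 // => k /negbTE ->.
  by rewrite mul0r.
have dr i : dot (r i) (r i) = 1 - w i ^+ 2.
  have -> : dot (r i) (r i) = \sum_k (k == i)%:R - 2 * w i * \sum_k (k == i)%:R * w k
      + w i ^+ 2 * dot w w.
    rewrite /dot mulr_sumr [X in _ = _ + X]mulr_sumr -sumrB -big_split /=.
    apply: eq_bigr => k _; rewrite /r.
    by case: eqP => _ /=; rewrite ?mulr1n ?mulr0n; ring.
  by rewrite w1 s1 s2; ring.
have rw i : dot (r i) w = 0.
  have -> : dot (r i) w = \sum_k (k == i)%:R * w k - w i * dot w w.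
    rewrite /dot mulr_sumr -sumrB; apply: eq_bigr => k _; rewrite /r; ring.
  by rewrite w1 s2 mulr1 subrr.
have le2 : w i0 ^+ 2 + w i1 ^+ 2 <= 1.
  rewrite -w1 /dot (bigD1 i0) //= (bigD1 i1) /=; last by [].
  rewrite addrA !expr2 lerDl; by apply: sumr_ge0 => k _; rewrite -expr2 sqr_ge0.
have [i hi] : exists i, 0 < 1 - w i ^+ 2.
  case: (ltP 0 (1 - w i0 ^+ 2)) => h; first by exists i0.
  exists i1; move: le2 h; set x := w i0 ^+ 2; set y := w i1 ^+ 2; lra.
rewrite -dr in hi; have [u [uu uw _]] := normalize w hi.
by exists u; rewrite uu uw rw mul0r.
Qed.

Lemma unit_dir (R : realType) n (hn : (2 <= n)%N) (a : 'I_n -> R) :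
  exists w : 'I_n -> R, dot w w = 1 /\ exists t, forall k, a k = t * w k.
Proof.
have [h|h] := ltP 0 (dot a a).
  have [u [uu _ au]] := normalize a h; by exists u; split => //; exists (Num.sqrt (dot a a)).
have a0 : dot a a = 0 by apply/eqP; rewrite eq_le h dot_ge0.
have h0 : (0 < n)%N by apply: leq_trans hn.
exists (fun k => (k == Ordinal h0)%:R); split.
  rewrite /dot (bigD1 (Ordinal h0)) //= ?eqxx big1 ?addr0 ?mulr1 // => k /negbTE ->.
  by rewrite mul0r.
by exists 0 => k; rewrite mul0r (dot0 a0).
Qed.

Lemma unit_dir_perp (R : realType) n (hn : (2 <= n)%N) (w r : 'I_n -> R) :
  dot w w = 1 -> dot r w = 0 ->
  exists u : 'I_n -> R, [/\ dot u u = 1, dot u w = 0 & exists t, forall k, r k = t * u k].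
Proof.
move=> w1 rw.
have [h|h] := ltP 0 (dot r r).
  have [u [uu uw au]] := normalize w h.
  by exists u; split => //; [rewrite uw rw mul0r | exists (Num.sqrt (dot r r))].
have r0 : dot r r = 0 by apply/eqP; rewrite eq_le h dot_ge0.
have [u [uu uw]] := unit_perp hn w1.
by exists u; split => //; exists 0 => k; rewrite mul0r (dot0 r0).
Qed.

Definition mkW (R : realType) n (w1 w2 : 'I_n -> R) : 'M[R]_(n, 2) :=
  \matrix_(k, j) (if j == o0 then w1 k else w2 k).

Lemma mkW_ortho (R : realType) n (w1 w2 : 'I_n -> R) :
  dot w1 w1 = 1 -> dot w2 w1 = 0 -> dot w2 w2 = 1 -> orthonormal_cols (mkW w1 w2).
Proof.
move=> h11 h21 h22; apply/matrixP => i j; rewrite !mxE.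
have e : forall (u v : 'I_n -> R), dot u v = \sum_k u k * v k by [].
case: (ord2P i) => ->; case: (ord2P j) => -> /=;
  [rewrite -[RHS]h11|rewrite -[RHS]h21 dotC|rewrite -[RHS]h21|rewrite -[RHS]h22]; rewrite /dot; apply: eq_bigr => k _; rewrite !mxE /= //.
Qed.

Lemma span_witness (R : realType) n (hn : (2 <= n)%N) (a b : 'I_n -> R) :
  exists W : 'M[R]_(n, 2), [/\ orthonormal_cols W,
    exists ta : 'I_2 -> R, forall k, a k = \sum_de W k de * ta de &
    exists tb : 'I_2 -> R, forall k, b k = \sum_de W k de * tb de].
Proof.
have [w1 [w11 [t1 at1]]] := unit_dir hn a.
pose r := fun k => b k - dot b w1 * w1 k.
have rw : dot r w1 = 0.
  have -> : dot r w1 = dot b w1 - dot b w1 * dot w1 w1.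
    rewrite /dot mulr_sumr -sumrB; apply: eq_bigr => k _; rewrite /r /= /dot; ring.
  by rewrite w11 mulr1 subrr.
have [w2 [w22 w21 [t2 rt2]]] := unit_dir_perp hn w11 rw.
have WE k t : \sum_de mkW w1 w2 k de * t de = w1 k * t o0 + w2 k * t o1.
  by rewrite sum_I2 !mxE.
exists (mkW w1 w2); split.
- exact: mkW_ortho.
- exists (fun de => if de == o0 then t1 else 0) => k.
  by rewrite WE /= at1; ring.
- exists (fun de => if de == o0 then dot b w1 else t2) => k.
  rewrite WE /=; have := rt2 k; rewrite /r => h.
  by rewrite -[b k](subrK (dot b w1 * w1 k)) h; ring.
Qed.

Lemma tnorm_ss (R : realType) p q r (T : tensor R p q r) : tnorm T = Num.sqrt (ss T).
Proof. by []. Qed.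

Lemma tnorm_sq (R : realType) p q r (T : tensor R p q r) : tnorm T ^+ 2 = ss T.
Proof. by rewrite tnorm_ss sqr_sqrtr // ss_ge0. Qed.

Lemma tnorm_le (R : realType) p q r p' q' r' (T : tensor R p q r) (T' : tensor R p' q' r') :
  (tnorm T <= tnorm T') = (ss T <= ss T').
Proof. by rewrite !tnorm_ss ler_sqrt // ss_ge0. Qed.

Lemma varphi_le (R : realType) k n (B : tensor R k k n) (X : 'M[R]_(k, 2)) (Z : 'M[R]_(n, 2)) :
  orthonormal_cols X -> orthonormal_cols Z ->
  varphi B <= ss B - ss (tmulr B X X Z).
Proof.
move=> oX oZ; rewrite /varphi.
have -> : ss B - ss (tmulr B X X Z) = tnorm (tsub B (tmul X X Z (tmulr B X X Z))) ^+ 2.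
  by rewrite tnorm_sq ss_approx // ss_tsub_self addr0.
apply: ge_inf; last by exists X, Z, (tmulr B X X Z).
by exists 0 => y [X' [Z' [H' [_ _ ->]]]]; rewrite sqr_ge0.
Qed.

Lemma varphi_ge (R : realType) k n (B : tensor R k k n) (c : R) :
  (exists X : 'M[R]_(k, 2), exists Z : 'M[R]_(n, 2), orthonormal_cols X /\ orthonormal_cols Z) ->
  (forall (X : 'M[R]_(k, 2)) (Z : 'M[R]_(n, 2)), orthonormal_cols X -> orthonormal_cols Z ->
     c <= ss B - ss (tmulr B X X Z)) ->
  c <= varphi B.
Proof.
move=> [X0 [Z0 [o1 o2]]] h; apply: lb_le_inf.
  by exists (tnorm (tsub B (tmul X0 X0 Z0 (fun _ _ _ => 0))) ^+ 2), X0, Z0, (fun _ _ _ => 0).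
move=> y [X [Z [H [oX oZ ->]]]]; rewrite tnorm_sq ss_approx //.
by apply: le_trans (h X Z oX oZ) _; rewrite lerDl ss_ge0.
Qed.

Lemma sum_split_l (R : realType) m1 m2 (F : 'I_(m1 + m2) -> R) :
  (forall i, F (rshift m1 i) = 0) -> \sum_i F i = \sum_i F (lshift m2 i).
Proof. by move=> h; rewrite big_split_ord /= [X in _ + X]big1 ?addr0. Qed.

Lemma sum_split_r (R : realType) m1 m2 (F : 'I_(m1 + m2) -> R) :
  (forall i, F (lshift m2 i) = 0) -> \sum_i F i = \sum_i F (rshift m1 i).
Proof. by move=> h; rewrite big_split_ord /= big1 ?add0r. Qed.

Section Blk3.
Context (R : realType) (m1 m2 n : nat) (A1 : tensor R m1 m1 n) (A2 : tensor R m2 m2 n).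
Local Notation A := (blk A1 A2).

Lemma ss_blk : ss A = ss A1 + ss A2.
Proof.
rewrite /ss big_split_ord /=; congr (_ + _); apply: eq_bigr => i _.
  rewrite big_split_ord /= [X in _ + X]big1 ?addr0 => [|j _].
    by apply: eq_bigr => j _; apply: eq_bigr => k _; rewrite blk_ll.
  by rewrite big1 // => k _; rewrite blk_lr expr0n.
rewrite big_split_ord /= big1 ?add0r => [|j _].
  by apply: eq_bigr => j _; apply: eq_bigr => k _; rewrite blk_rr.
by rewrite big1 // => k _; rewrite blk_rl expr0n.
Qed.

Lemma is_solution_ss m' n' (B : tensor R m' m' n') (U : 'M[R]_(m', 2)) (W : 'M[R]_(n', 2)) :
  is_solution B U W ->
  forall (X : 'M[R]_(m', 2)) (Z : 'M[R]_(n', 2)), orthonormal_cols X -> orthonormal_cols Z ->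
    ss (tmulr B X X Z) <= ss (tmulr B U U W).
Proof. by case=> _ _ h X Z oX oZ; rewrite -tnorm_le; exact: h. Qed.

Lemma varphi_lb1 (U : 'M[R]_(m1 + m2, 2)) (W : 'M[R]_(n, 2)) :
  is_solution A U W -> (forall i j, U (rshift m1 i) j = 0) ->
  varphi A1 + ss A2 <= varphi A.
Proof.
move=> sol h; have [oU oW _] := sol.
pose U1 : 'M[R]_(m1, 2) := \matrix_(i, j) U (lshift m2 i) j.
have oU1 : orthonormal_cols U1.
  rewrite /orthonormal_cols -oU; apply/matrixP => a b; rewrite !mxE.
  rewrite (sum_split_l (F := fun i => U^T a i * U i b)) => [|i]; last by rewrite !mxE h mul0r.
  by apply: eq_bigr => i _; rewrite !mxE.
have eT a b c : tmulr A U U W a b c = tmulr A1 U1 U1 W a b c.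
  rewrite !tmulr_E; apply: eq_bigr => k _; congr (_ * _).
  rewrite (sum_split_l (F := fun i => \sum_j U i a * U j b * A i j k)) => [|i];
    last by rewrite big1 // => j _; rewrite h !mul0r.
  apply: eq_bigr => i _.
  rewrite (sum_split_l (F := fun j => U (lshift m2 i) a * U j b * A (lshift m2 i) j k)) => [|j];
    last by rewrite h mulr0 mul0r.
  by apply: eq_bigr => j _; rewrite !mxE blk_ll.
apply: varphi_ge.
  by exists U, W.
move=> X Z oX oZ.
have := is_solution_ss sol oX oZ; rewrite (ss_ext eT) ss_blk.
have := varphi_le A1 oU1 oW; lra.
Qed.

Lemma varphi_lb2 (U : 'M[R]_(m1 + m2, 2)) (W : 'M[R]_(n, 2)) :
  is_solution A U W -> (forall i j, U (lshift m2 i) j = 0) ->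
  varphi A2 + ss A1 <= varphi A.
Proof.
move=> sol h; have [oU oW _] := sol.
pose U2 : 'M[R]_(m2, 2) := \matrix_(i, j) U (rshift m1 i) j.
have oU2 : orthonormal_cols U2.
  rewrite /orthonormal_cols -oU; apply/matrixP => a b; rewrite !mxE.
  rewrite (sum_split_r (F := fun i => U^T a i * U i b)) => [|i]; last by rewrite !mxE h mul0r.
  by apply: eq_bigr => i _; rewrite !mxE.
have eT a b c : tmulr A U U W a b c = tmulr A2 U2 U2 W a b c.
  rewrite !tmulr_E; apply: eq_bigr => k _; congr (_ * _).
  rewrite (sum_split_r (F := fun i => \sum_j U i a * U j b * A i j k)) => [|i];
    last by rewrite big1 // => j _; rewrite h !mul0r.
  apply: eq_bigr => i _.
  rewrite (sum_split_r (F := fun j => U (rshift m1 i) a * U j b * A (rshift m1 i) j k)) => [|j];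
    last by rewrite h mulr0 mul0r.
  by apply: eq_bigr => j _; rewrite !mxE blk_rr.
apply: varphi_ge.
  by exists U, W.
move=> X Z oX oZ.
have := is_solution_ss sol oX oZ; rewrite (ss_ext eT) ss_blk.
have := varphi_le A2 oU2 oW; lra.
Qed.

End Blk3.

Lemma ortho_mul (R : realType) p (U : 'M[R]_(p, 2)) (V : 'M[R]_2) :
  orthonormal_cols U -> orthonormal_cols V -> orthonormal_cols (U *m V).
Proof.
rewrite /orthonormal_cols => oU oV.
by rewrite trmx_mul mulmxA -(mulmxA V^T) oU mulmx1 oV.
Qed.

Lemma ortho1 (R : realType) : orthonormal_cols (1%:M : 'M[R]_2).
Proof. by rewrite /orthonormal_cols trmx1 mulmx1. Qed.

Section Core.
Context (R : realType) (m1 m2 n : nat) (A1 : tensor R m1 m1 n) (A2 : tensor R m2 m2 n).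
Local Notation A := (blk A1 A2).

Lemma Dmx_mul p (U : 'M[R]_(m1 + m2, p)) (V : 'M[R]_(p, 2)) :
  Dmx (U *m V) = Dmx U *m V.
Proof.
apply/matrixP => i j; rewrite !mxE mulr_sumr; apply: eq_bigr => k _.
by rewrite !mxE mulrA.
Qed.

Lemma abs_sq (x : R) : `|x| * `|x| = x * x.
Proof. by rewrite -normrM ger0_norm // -expr2 sqr_ge0. Qed.

Lemma core_block (Y : 'M[R]_(m1 + m2, 2)) (W : 'M[R]_(n, 2)) :
  (2 <= n)%N -> nonneg_tensor A ->
  orthonormal_cols Y -> orthonormal_cols W ->
  (forall i, Y (rshift m1 i) o0 = 0) -> (forall i, Y (lshift m2 i) o1 = 0) ->
  exists W' : 'M[R]_(n, 2),
    [/\ orthonormal_cols (map_mx Num.norm Y), orthonormal_cols W' &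
        ss (tmulr A Y Y W) <= ss (tmulr A (map_mx Num.norm Y) (map_mx Num.norm Y) W')].
Proof.
move=> hn nnA oY oW h0 h1.
set Ya := map_mx Num.norm Y.
have ha0 i : Ya (rshift m1 i) o0 = 0 by rewrite mxE h0 normr0.
have ha1 i : Ya (lshift m2 i) o1 = 0 by rewrite mxE h1 normr0.
have prodE i a b : Ya i a * Ya i b = Y i a * Y i b.
  rewrite !mxE; case: (ord2P a) => ->; case: (ord2P b) => ->; rewrite ?abs_sq //;
  case: (split_ordP i) => i' ->; rewrite ?h0 ?h1 ?normr0 ?mulr0 ?mul0r //.
have oYa : orthonormal_cols Ya.
  rewrite /orthonormal_cols -oY; apply/matrixP => a b; rewrite !mxE.
  by apply: eq_bigr => i _; rewrite !mxE -[in RHS]prodE !mxE.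
have [W' [oW' [ta hta] [tb htb]]] := span_witness hn (cc A1 A2 Ya o0) (cc A1 A2 Ya o1).
exists W'; split => //.
rewrite !F_block //.
have -> : \sum_ga (\sum_k W' k ga * cc A1 A2 Ya o0 k) ^+ 2 = \sum_k cc A1 A2 Ya o0 k ^+ 2.
  under eq_bigr do under eq_bigr do rewrite hta.
  by rewrite bessel_eq //; apply: eq_bigr => k _; rewrite hta.
have -> : \sum_ga (\sum_k W' k ga * cc A1 A2 Ya o1 k) ^+ 2 = \sum_k cc A1 A2 Ya o1 k ^+ 2.
  under eq_bigr do under eq_bigr do rewrite htb.
  by rewrite bessel_eq //; apply: eq_bigr => k _; rewrite htb.
have ccle a k : cc A1 A2 Y a k ^+ 2 <= cc A1 A2 Ya a k ^+ 2.
  rewrite -real_normK ?num_real // -[X in _ <= X]real_normK ?num_real //.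
  apply: lerXn2r; rewrite ?nnegrE ?normr_ge0 //.
  rewrite /cc; apply: le_trans (ler_norm_sum _ _ _) _.
  rewrite [leRHS]ger0_norm; last first.
    apply: sumr_ge0 => i _; apply: sumr_ge0 => j _; rewrite !mxE.
    by apply: mulr_ge0 => //; apply: mulr_ge0.
  apply: ler_sum => i _; apply: le_trans (ler_norm_sum _ _ _) _.
  apply: ler_sum => j _; rewrite !mxE !normrM (ger0_norm (nnA i j k)).
  done.
apply: lerD.
  apply: le_trans (bessel _ oW) _; exact: ler_sum => k _.
apply: le_trans (bessel _ oW) _; exact: ler_sum => k _.
Qed.

End Core.

Lemma main_core (R : realType) (m1 m2 n : nat)
  (A1 : tensor R m1 m1 n) (A2 : tensor R m2 m2 n) :
  (2 <= n)%N ->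
  nonneg_tensor (blk A1 A2) ->
  varphi (blk A1 A2) < varphi A1 + tnorm A2 ^+ 2 ->
  varphi (blk A1 A2) < varphi A2 + tnorm A1 ^+ 2 ->
  unique_solution (blk A1 A2) ->
  (exists U0 W0, is_solution (blk A1 A2) U0 W0) ->
  exists (u1 : 'cV[R]_m1) (u2 : 'cV[R]_m2) (W : 'M[R]_(n, 2)),
    [/\ is_solution (blk A1 A2) (block_mx u1 0 0 u2) W,
        forall i, 0 <= u1 i ord0 &
        forall i, 0 <= u2 i ord0].
Proof.
move=> hn nnA lt1 lt2 uniq [U0 [W0 sol]].
have [oU0 oW0 _] := sol.
have solD : is_solution (blk A1 A2) (Dmx U0) W0.
  split; [exact: Dmx_ortho | exact: oW0 |] => X Z oX oZ.
  rewrite tnorm_le (ss_ext (tmulr_D A1 A2 U0 W0)); apply: (is_solution_ss sol oX oZ).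
have [Q1 [Q3 [oQ1 _ DU _]]] := uniq _ _ _ _ sol solD.
have Q1E : Q1 = U0^T *m Dmx U0 by rewrite DU mulmxA oU0 mul1mx.
have symQ : Q1 o0 o1 = Q1 o1 o0.
  rewrite Q1E !mxE; apply: eq_bigr => i _; rewrite !mxE; ring.
case: (Q2_cases oQ1 symQ) => [Q1I|Q1N|[V [oV QV]]].
- have h i j : U0 (rshift m1 i) j = 0.
    have := congr1 (fun M : 'M[R]_(m1 + m2, 2) => M (rshift m1 i) j) DU.
    rewrite Q1I mulmx1 mxE sgn_r => e.
    lra.
  have := varphi_lb1 sol h; rewrite tnorm_sq in lt1; lra.
- have h i j : U0 (lshift m2 i) j = 0.
    have := congr1 (fun M : 'M[R]_(m1 + m2, 2) => M (lshift m2 i) j) DU.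
    rewrite Q1N mulmxN mulmx1 !mxE sgn_l mul1r => e.
    lra.
  have := varphi_lb2 sol h; rewrite tnorm_sq in lt2; lra.
have [Y YE] : {Y | Y = U0 *m V} by exists (U0 *m V).
have oY : orthonormal_cols Y by rewrite YE; exact: ortho_mul.
have DY : Dmx Y = Y *m Emx R by rewrite YE Dmx_mul DU -mulmxA QV mulmxA.
have DYE i j : @sgn R m1 m2 i * Y i j = (Y *m Emx R) i j.
  by rewrite -DY DmxE.
have h0 i : Y (rshift m1 i) o0 = 0.
  have e := DYE (rshift m1 i) o0; rewrite mulmx2E sgn_r /Emx in e.
  have [f1 f2 f3 f4] := mk2E 1 0 0 (-1 : R); rewrite f1 f3 mulr1 mulr0 addr0 in e.
  lra.
have h1 i : Y (lshift m2 i) o1 = 0.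
  have e := DYE (lshift m2 i) o1; rewrite mulmx2E sgn_l /Emx mul1r in e.
  have [f1 f2 f3 f4] := mk2E 1 0 0 (-1 : R); rewrite f2 f4 mulr0 add0r mulrN1 in e.
  lra.
have [W' [oYa oW' le]] := core_block hn nnA oY oW0 h0 h1.
set Ya := map_mx Num.norm Y in oYa le.
exists (\col_i Ya (lshift m2 i) o0), (\col_i Ya (rshift m1 i) o1), W'.
have blkE : block_mx (\col_i Ya (lshift m2 i) o0) 0 0 (\col_i Ya (rshift m1 i) o1) = Ya.
  apply/matrixP => i j.
  have l0 : @lshift 1 1 ord0 = o0 :> 'I_2 by apply/val_inj.
  have r0 : @rshift 1 1 ord0 = o1 :> 'I_2 by apply/val_inj.
  case: (split_ordP i) => i' ->; case: (split_ordP j) => j' ->;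
    rewrite ?block_mxEul ?block_mxEur ?block_mxEdl ?block_mxEdr !mxE ?ord1 ?l0 ?r0 //.
  - by rewrite h1 normr0.
  - by rewrite h0 normr0.
split; last 2 first.
- by move=> i; rewrite !mxE normr_ge0.
- by move=> i; rewrite !mxE normr_ge0.
rewrite blkE; split => // X Z oX oZ.
rewrite tnorm_le; apply: le_trans (is_solution_ss sol oX oZ) _.
apply: le_trans le.
have -> : ss (tmulr (blk A1 A2) Y Y W0) = ss (tmulr (blk A1 A2) (U0 *m V) (U0 *m V) (W0 *m 1%:M)).
  by rewrite mulmx1 YE.
by rewrite ss_tmulr_rot //; apply: ortho1.
Qed.

Local Open Scope classical_set_scope.

Lemma cont_const (R : realType) N (c : R) : continuous (fun _ : 'rV[R]_N => c).
Proof. exact: cst_continuous. Qed.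

Lemma cont_coord (R : realType) N (k : 'I_N) : continuous (fun v : 'rV[R]_N => v ord0 k).
Proof. exact: coord_continuous. Qed.

Lemma cont_add (R : realType) N (f g : 'rV[R]_N -> R) :
  continuous f -> continuous g -> continuous (fun v => f v + g v).
Proof. by move=> cf cg x; exact: (continuousD (cf x) (cg x)). Qed.

Lemma cont_mul (R : realType) N (f g : 'rV[R]_N -> R) :
  continuous f -> continuous g -> continuous (fun v => f v * g v).
Proof. by move=> cf cg x; exact: (continuousM (cf x) (cg x)). Qed.

Lemma cont_sum (R : realType) N (I : Type) (r : seq I) (P : pred I) (F : I -> 'rV[R]_N -> R) :
  (forall i, continuous (F i)) -> continuous (fun v => \sum_(i <- r | P i) F i v).
Proof.
move=> cF; elim: r => [|a r IH].
  by under eq_fun do rewrite big_nil; exact: cont_const.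
case: (boolP (P a)) => Pa.
  under eq_fun do rewrite big_cons Pa.
  exact: cont_add.
by under eq_fun do rewrite big_cons (negbTE Pa).
Qed.

Lemma cont_sq (R : realType) N (f : 'rV[R]_N -> R) :
  continuous f -> continuous (fun v => f v ^+ 2).
Proof. by move=> cf; under eq_fun do rewrite expr2; exact: cont_mul. Qed.

Section Exist.
Context (R : realType) (M n : nat).
Local Notation N := (M * 2 + n * 2)%N.

Definition Xof (v : 'rV[R]_N) : 'M[R]_(M, 2) :=
  \matrix_(i, j) v ord0 (lshift (n * 2) (mxvec_index i j)).
Definition Zof (v : 'rV[R]_N) : 'M[R]_(n, 2) :=
  \matrix_(i, j) v ord0 (rshift (M * 2) (mxvec_index i j)).

Lemma XofK (X : 'M[R]_(M, 2)) (Z : 'M[R]_(n, 2)) : Xof (row_mx (mxvec X) (mxvec Z)) = X.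
Proof. by apply/matrixP => i j; rewrite mxE row_mxEl mxvecE. Qed.
Lemma ZofK (X : 'M[R]_(M, 2)) (Z : 'M[R]_(n, 2)) : Zof (row_mx (mxvec X) (mxvec Z)) = Z.
Proof. by apply/matrixP => i j; rewrite mxE row_mxEr mxvecE. Qed.

Definition Sset : set 'rV[R]_N :=
  [set v | orthonormal_cols (Xof v) /\ orthonormal_cols (Zof v)].

Lemma entry_le1 p (X : 'M[R]_(p, 2)) i j : orthonormal_cols X -> `|X i j| <= 1.
Proof.
move=> oX; have e : \sum_k X k j * X k j = 1 by rewrite (orthoE j j oX) eqxx.
rewrite -(ler_pXn2r (n := 2)) ?nnegrE ?normr_ge0 // expr1n real_normK ?num_real //.
rewrite -e (bigD1 i) //= expr2 lerDl; apply: sumr_ge0 => k _.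
by rewrite -expr2 sqr_ge0.
Qed.

Lemma coord_le1 v k : Sset v -> `|v ord0 k| <= 1.
Proof.
case=> oX oZ; case: (split_ordP k) => k' ->.
  case/mxvec_indexP: k' => i j.
  by have := entry_le1 i j oX; rewrite mxE.
case/mxvec_indexP: k' => i j.
by have := entry_le1 i j oZ; rewrite mxE.
Qed.

Lemma Sset_bounded : bounded_set Sset.
Proof.
exists 1; split; first by rewrite num_real.
move=> r r1 v Sv /=; apply: le_trans (ltW r1).
rewrite [leLHS]mx_normrE; apply/bigmax_leP; split => // ij _.
by rewrite (ord1 ij.1); exact: coord_le1.
Qed.

Definition ent (t : 'I_2 * 'I_2 * bool) (v : 'rV[R]_N) : R :=
  if t.2 then \sum_i v ord0 (rshift (M * 2) (mxvec_index i t.1.1)) *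
                    v ord0 (rshift (M * 2) (mxvec_index i t.1.2))
  else \sum_i v ord0 (lshift (n * 2) (mxvec_index i t.1.1)) *
                    v ord0 (lshift (n * 2) (mxvec_index i t.1.2)).

Lemma ent_cont t : continuous (ent t).
Proof.
rewrite /ent; case: t.2.
  by apply: cont_sum => i; apply: cont_mul; apply: cont_coord.
by apply: cont_sum => i; apply: cont_mul; apply: cont_coord.
Qed.

Lemma SsetE : Sset = \bigcap_(t in [set: 'I_2 * 'I_2 * bool])
   [set v | ent t v = (1%:M : 'M[R]_2) t.1.1 t.1.2].
Proof.
apply/seteqP; split => v.
  case=> oX oZ [[a b] c] _ /=; rewrite /ent /=; case: c.
    rewrite -oZ mxE; apply: eq_bigr => i _; rewrite !mxE //.
  rewrite -oX mxE; apply: eq_bigr => i _; rewrite !mxE //.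
move=> h; split; apply/matrixP => a b.
  have := h (a, b, false) I; rewrite /ent /= => <-; rewrite mxE.
  by apply: eq_bigr => i _; rewrite !mxE.
have := h (a, b, true) I; rewrite /ent /= => <-; rewrite mxE.
by apply: eq_bigr => i _; rewrite !mxE.
Qed.

Lemma Sset_closed : closed Sset.
Proof.
rewrite SsetE; apply: closed_bigI => t _.
have -> : [set v | ent t v = (1%:M : 'M[R]_2) t.1.1 t.1.2] =
   ent t @^-1` [set x | x = (1%:M : 'M[R]_2) t.1.1 t.1.2] by [].
apply: preimage_closed; last exact: closed_eq.
by move=> x _; apply: ent_cont.
Qed.

Lemma Sset_compact : compact Sset.
Proof. apply: bounded_closed_compact; [exact: Sset_bounded | exact: Sset_closed]. Qed.

End Exist.

Lemma exists_solution (R : realType) M n (B : tensor R M M n) :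
  (2 <= M)%N -> (2 <= n)%N -> exists U W, is_solution B U W.
Proof.
move=> hM hn.
pose g (v : 'rV[R]_(M * 2 + n * 2)) := ss (tmulr B (Xof v) (Xof v) (Zof v)).
have gE : g = fun v => \sum_(a < 2) \sum_(b < 2) \sum_(c < 2)
   (\sum_(i < M) \sum_(j < M) \sum_(k < n)
     (v ord0 (lshift (n * 2) (mxvec_index i a)) * v ord0 (lshift (n * 2) (mxvec_index j b))
      * v ord0 (rshift (M * 2) (mxvec_index k c)) * B i j k)) ^+ 2.
  apply: funext => v; rewrite /g /ss; do 3 (apply: eq_bigr => ? _); congr (_ ^+ 2).
  by rewrite /tmulr /tmul; do 3 (apply: eq_bigr => ? _); rewrite !mxE.
have gc : continuous g.
  rewrite gE; do 3 (apply: cont_sum => ?); apply: cont_sq.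
  do 3 (apply: cont_sum => ?).
  by apply: cont_mul; [do 2 (apply: cont_mul; last exact: cont_coord); exact: cont_coord
                      | exact: cont_const].
have [X0 [oX0 _ _]] := span_witness hM (fun _ => 0 : R) (fun _ => 0).
have [Z0 [oZ0 _ _]] := span_witness hn (fun _ => 0 : R) (fun _ => 0).
have S0 : @Sset R M n !=set0.
  by exists (row_mx (mxvec X0) (mxvec Z0)); split; rewrite ?XofK ?ZofK.
have [c /set_mem [oXc oZc] cmax] :=
  compact_EVT_max S0 (@Sset_compact R M n) (continuous_subspaceT gc).
exists (Xof c), (Zof c); split => // X Z oX oZ.
rewrite tnorm_le.
have := cmax (row_mx (mxvec X) (mxvec Z)).
rewrite /g XofK ZofK; apply; apply/mem_set; split; rewrite ?XofK ?ZofK //.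
Qed.

Theorem mainTheorem4 (R : realType) (m1 m2 n : nat)
  (A1 : tensor R m1 m1 n) (A2 : tensor R m2 m2 n) :
  (2 <= m1)%N -> (2 <= m2)%N -> (2 <= n)%N ->
  sym12 (blk A1 A2) ->
  nonneg_tensor (blk A1 A2) ->
  irreducible A1 -> irreducible A2 ->
  varphi (blk A1 A2) < varphi A1 + tnorm A2 ^+ 2 ->
  varphi (blk A1 A2) < varphi A2 + tnorm A1 ^+ 2 ->
  unique_solution (blk A1 A2) ->
  exists (u1 : 'cV[R]_m1) (u2 : 'cV[R]_m2) (W : 'M[R]_(n, 2)),
    [/\ is_solution (blk A1 A2) (block_mx u1 0 0 u2) W,
        forall i, 0 <= u1 i ord0 &
        forall i, 0 <= u2 i ord0].
Proof.
move=> h1 h2 hn _ nnA _ _ lt1 lt2 uniq.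
apply: main_core => //.
apply: exists_solution => //.
by rewrite (leq_trans h1) // leq_addr.
Qed.
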